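(* Let $G = T \oplus R$ be a splitting abelian group, where $T$ is the torsion subgroup of $G$ and $R$ is torsion-free. Then $G$ is semi-generalized Bassian if, and only if, both $T$ and $R$ are semi-generalized Bassian and, moreover, $T$ is divisible whenever the rank of $R$ is infinite.
   Context: All groups are additively written abelian groups. A subgroup $H$ of a group $A$ is essential in $A$ if $H \cap S \neq \{0\}$ for every non-zero subgroup $S$ of $A$. A group $G$ is semi-generalized Bassian if, for every subgroup $H \le G$, the existence of an injective homomorphism $G \to G/H$ implies that $H$ is an essential subgroup of some direct summand of $G$. *)

(* Defs.v *)
From mathcomp Require Import all_boot all_order all_algebra.
Set Implicit Arguments. Unset Strict Implicit. Unset Printing Implicit Defensive.
Import GRing.Theory.
Local Open Scope ring_scope.

Definition subgroup (G : zmodType) (H : G -> Prop) : Prop :=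
  H 0 /\ (forall x y, H x -> H y -> H (x - y)).

Definition direct_summand (G : zmodType) (D : G -> Prop) : Prop :=
  subgroup D /\
  exists C : G -> Prop, subgroup C /\
    (forall x, D x -> C x -> x = 0) /\
    (forall x, exists d c, D d /\ C c /\ x = d + c).

Definition essential_in (G : zmodType) (H A : G -> Prop) : Prop :=
  (forall x, H x -> A x) /\
  (forall S : G -> Prop, subgroup S -> (forall x, S x -> A x) ->
     (exists x, S x /\ x <> 0) -> exists x, H x /\ S x /\ x <> 0).

(* There is an injective homomorphism G -> G/H.  A map f : G -> G/H is
   described by a choice of representatives g : G -> G (f x = g x + H);
   f is additive iff g(x+y) - (g x + g y) lies in H, and f is injective iff
   g x + H = g y + H implies x = y. *)
Definition inj_hom_into_quotient (G : zmodType) (H : G -> Prop) : Prop :=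
  exists g : G -> G,
    (forall x y, H (g (x + y) - (g x + g y))) /\
    (forall x y, H (g x - g y) -> x = y).

Definition semi_generalized_Bassian (G : zmodType) : Prop :=
  forall H : G -> Prop, subgroup H -> inj_hom_into_quotient H ->
    exists D : G -> Prop, direct_summand D /\ essential_in H D.

Definition torsion_group (G : zmodType) : Prop :=
  forall x : G, exists n : nat, (0 < n)%N /\ x *+ n = 0.

Definition torsion_free (G : zmodType) : Prop :=
  forall (x : G) (n : nat), (0 < n)%N -> x *+ n = 0 -> x = 0.

Definition divisible (G : zmodType) : Prop :=
  forall (x : G) (n : nat), (0 < n)%N -> exists y : G, y *+ n = x.

Definition independent (G : zmodType) (n : nat) (x : 'I_n -> G) : Prop :=
  (forall i, x i <> 0) /\
  forall k : 'I_n -> int, \sum_(i < n) x i *~ k i = 0 -> forall i, x i *~ k i = 0.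

(* The (torsion-free) rank of G is infinite iff G contains independent
   families of every finite size (independence has finite character). *)
Definition infinite_rank (G : zmodType) : Prop :=
  forall n : nat, exists x : 'I_n -> G, independent x.

(* Main.v *)
Require Import Defs.
From mathcomp Require Import all_boot all_order all_algebra.
From mathcomp Require Import boolp classical_sets.
Set Implicit Arguments. Unset Strict Implicit. Unset Printing Implicit Defensive.
Import GRing.Theory Num.Theory.
Local Open Scope ring_scope.
Section Basics.
Variable G : zmodType.
Implicit Types (H : G -> Prop) (x y : G).

Lemma sg0 H : subgroup H -> H 0. Proof. by case. Qed.
Lemma sgN H x : subgroup H -> H x -> H (- x).
Proof. by move=> [h0 hB] hx; rewrite -sub0r; apply: hB. Qed.
Lemma sgB H x y : subgroup H -> H x -> H y -> H (x - y).
Proof. by move=> [h0 hB]; apply: hB. Qed.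
Lemma sgD H x y : subgroup H -> H x -> H y -> H (x + y).
Proof. by move=> sH hx hy; rewrite -[y]opprK; apply: sgB => //; apply: sgN. Qed.
Lemma sgMn H x n : subgroup H -> H x -> H (x *+ n).
Proof. move=> sH hx; elim: n => [|n IH]; first by rewrite mulr0n; apply: sg0.
by rewrite mulrS; apply: sgD. Qed.
Lemma sgMz H x k : subgroup H -> H x -> H (x *~ k).
Proof. move=> sH hx; case: k => n; first by apply: sgMn.
by rewrite NegzE mulrNz; apply: sgN => //; apply: sgMn. Qed.
Lemma sg_sum H (I : Type) (r : seq I) (P : pred I) (F : I -> G) :
  subgroup H -> (forall i, P i -> H (F i)) -> H (\sum_(i <- r | P i) F i).
Proof. move=> sH hF; apply: (big_ind H) => //; [exact: sg0|]. by move=> a b; apply: sgD. Qed.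

Definition essE H (S : G -> Prop) :=
  (forall x, H x -> S x) /\
  forall x, S x -> x <> 0 -> exists k : int, H (x *~ k) /\ x *~ k <> 0.

Lemma essE_of H S : subgroup S -> essential_in H S -> essE H S.
Proof.
move=> sS [HS ess]; split=> // x Sx x0.
have sC : subgroup (fun y => exists k : int, y = x *~ k).
  split; first by exists 0; rewrite mulr0z.
  by move=> _ _ [a ->] [b ->]; exists (a - b); rewrite mulrzBr.
have [] := ess _ sC.
- by move=> _ [k ->]; apply: sgMz.
- by exists x; split=> //; exists 1; rewrite mulr1z.
by move=> y [Hy [[k ey] ne]]; exists k; rewrite -ey.
Qed.

Lemma ess_of H S : essE H S -> essential_in H S.
Proof.
move=> [HS ess]; split=> // S' sS' S'S [y [S'y y0]].
have [k [Hk nk]] := ess y (S'S _ S'y) y0.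
by exists (y *~ k); split=> //; split=> //; apply: sgMz.
Qed.

End Basics.

Lemma zorn_sets (T : Type) (P : (T -> Prop) -> Prop) (X0 : T -> Prop) :
  P X0 ->
  (forall F : (T -> Prop) -> Prop, (forall X, F X -> P X) -> (exists X, F X) ->
     (forall X Y, F X -> F Y -> (forall t, X t -> Y t) \/ (forall t, Y t -> X t)) ->
     P (fun t => exists X, F X /\ X t)) ->
  exists M, P M /\ (forall N, P N -> (forall t, M t -> N t) -> forall t, N t -> M t).
Proof.
move=> P0 Pch.
pose S := {X : T -> Prop | P X}.
pose R (a b : S) := `[< forall t, sval a t -> sval b t >].
have [] := @ZL_preorder S (exist _ X0 P0) R.
- by move=> a; apply/asboolP.
- by move=> a b c /asboolP ab /asboolP bc; apply/asboolP => t /ab /bc.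
- move=> A totA.
  have [[a Aa]|nA] := pselect (exists a, A a); last first.
    by exists (exist _ X0 P0) => s As; exfalso; apply: nA; exists s.
  have PU : P (fun t => exists X, (fun X => exists s : S, A s /\ sval s = X) X /\ X t).
    apply: Pch.
    - by move=> X [s [_ <-]]; exact: (svalP s).
    - by exists (sval a), a.
    - move=> X Y [s [As <-]] [s' [As' <-]].
      by have [/asboolP|/asboolP] := totA s s' As As'; [left|right].
  exists (exist _ _ PU) => s As; apply/asboolP => t st /=.
  by exists (sval s); split=> //; exists s.
move=> [M PM] maxM; exists M; split=> // N PN MN.
have /asboolP := maxM (exist _ N PN) (introT (asboolP _) MN).
by [].
Qed.
Lemma pairMn (A D : zmodType) (x : A) (y : D) n : ((x, y) : A * D) *+ n = (x *+ n, y *+ n).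
Proof. by elim: n => [|n IH]; rewrite ?mulr0n // !mulrS IH. Qed.
Lemma pairMz (A D : zmodType) (x : A) (y : D) k : ((x, y) : A * D) *~ k = (x *~ k, y *~ k).
Proof. case: k => n; first by rewrite -!pmulrn pairMn.
by rewrite !NegzE !mulrNz -!pmulrn pairMn. Qed.
Lemma fstMz (A D : zmodType) (p : A * D) k : (p *~ k).1 = p.1 *~ k.
Proof. by case: p => x y; rewrite pairMz. Qed.
Lemma sndMz (A D : zmodType) (p : A * D) k : (p *~ k).2 = p.2 *~ k.
Proof. by case: p => x y; rewrite pairMz. Qed.
Lemma fstMn (A D : zmodType) (p : A * D) n : (p *+ n).1 = p.1 *+ n.
Proof. by case: p => x y; rewrite pairMn. Qed.
Lemma sndMn (A D : zmodType) (p : A * D) n : (p *+ n).2 = p.2 *+ n.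
Proof. by case: p => x y; rewrite pairMn. Qed.
Lemma fst_sum (A D : zmodType) (I : Type) (r : seq I) (P : pred I) (F : I -> A * D) :
  (\sum_(i <- r | P i) F i).1 = \sum_(i <- r | P i) (F i).1.
Proof. by elim/big_rec2: _ => // i y1 y2 _ <-. Qed.
Lemma snd_sum (A D : zmodType) (I : Type) (r : seq I) (P : pred I) (F : I -> A * D) :
  (\sum_(i <- r | P i) F i).2 = \sum_(i <- r | P i) (F i).2.
Proof. by elim/big_rec2: _ => // i y1 y2 _ <-. Qed.

Lemma pairB (A D : zmodType) (x1 x2 : A) (y1 y2 : D) :
  ((x1, y1) : A * D) - (x2, y2) = (x1 - x2, y1 - y2).
Proof. by []. Qed.
Lemma pairD (A D : zmodType) (x1 x2 : A) (y1 y2 : D) :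
  ((x1, y1) : A * D) + (x2, y2) = (x1 + x2, y1 + y2).
Proof. by []. Qed.
Lemma pairN (A D : zmodType) (x1 : A) (y1 : D) :
  - ((x1, y1) : A * D) = (- x1, - y1).
Proof. by []. Qed.
Lemma pair0 (A D : zmodType) : (0 : A * D) = (0, 0).
Proof. by []. Qed.

Lemma addrBB (V : zmodType) (a b c d : V) : (a + b) - (c + d) = (a - c) + (b - d).
Proof. by rewrite opprD addrACA. Qed.

Section Baer.
Variables (A D : zmodType) (Dp : D -> Prop) (B : A -> Prop) (f : A -> D).
Hypotheses (sDp : subgroup Dp)
  (divDp : forall d n, Dp d -> (0 < n)%N -> exists e, Dp e /\ e *+ n = d)
  (sB : subgroup B) (fDp : forall x, B x -> Dp (f x))
  (fadd : forall x y, B x -> B y -> f (x - y) = f x - f y).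

Let P (M : A * D -> Prop) :=
  [/\ subgroup M, (forall d, M (0, d) -> d = 0), (forall p, M p -> Dp p.2)
    & (forall x, B x -> M (x, f x))].

Let P0 : P (fun p => B p.1 /\ p.2 = f p.1).
Proof.
have f0 : f 0 = 0 by rewrite -(subrr 0) fadd ?subrr //; apply: sg0.
split.
- split; first by split; [apply: sg0|rewrite f0].
  by move=> [x1 y1] [x2 y2] /= [b1 ->] [b2 ->]; split; [apply: sgB|rewrite fadd].
- by move=> d /= [_ ->].
- by move=> [x y] /= [bx ->]; apply: fDp.
- by move=> x bx.
Qed.

Let Pch (F : (A * D -> Prop) -> Prop) : (forall X, F X -> P X) -> (exists X, F X) ->
     (forall X Y, F X -> F Y -> (forall t, X t -> Y t) \/ (forall t, Y t -> X t)) ->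
     P (fun t => exists X, F X /\ X t).
Proof.
move=> FP [X0 FX0] tot; split.
- split; first by exists X0; split=> //; case: (FP _ FX0) => [[]].
  move=> p q [X [FX Xp]] [Y [FY Yq]].
  have [XY|YX] := tot _ _ FX FY.
  + by exists Y; split=> //; case: (FP _ FY) => sY _ _ _; apply: sgB => //; apply: XY.
  + by exists X; split=> //; case: (FP _ FX) => sX _ _ _; apply: sgB => //; apply: YX.
- by move=> d [X [FX Xd]]; case: (FP _ FX) => _ h _ _; apply: h.
- by move=> p [X [FX Xp]]; case: (FP _ FX) => _ _ h _; apply: h.
- by move=> x bx; exists X0; split=> //; case: (FP _ FX0) => _ _ _ h; apply: h.
Qed.

Let extend (M : A * D -> Prop) (a : A) : P M -> ~ (exists d, M (a, d)) ->
  exists M', [/\ P M', (forall p, M p -> M' p) & exists e, M' (a, e)].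
Proof.
move=> [sM fM DM BM] na.
have Mfun p q : M p -> M q -> p.1 = q.1 -> p.2 = q.2.
  move=> Mp Mq e; apply/eqP; rewrite -subr_eq0; apply/eqP; apply: fM.
  by case: p q Mp Mq e => [x1 y1] [x2 y2] Mp Mq /= e; have := sgB sM Mp Mq; rewrite pairB e subrr.
pose dom n := exists d, M (a *+ n, d).
have [m [dm [e [Mm [De [edm mdiv]]]]]] : exists m dm e, M (a *+ m, dm) /\ Dp e /\ e *+ m = dm /\
     forall n, dom n -> (m %| n)%N.
  have [[n0 [n0p dn0]]|nex] := pselect (exists n, (0 < n)%N /\ dom n); last first.
    exists 0%N, 0, 0; split; first by rewrite mulr0n -pair0; apply: sg0.
    split; first by apply: sg0.
    split; first by rewrite mulr0n.
    move=> n dn; rewrite dvd0n; apply/eqP; case: n dn => // n dn.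
    by exfalso; apply: nex; exists n.+1.
  have exP : exists n, `[< (0 < n)%N /\ dom n >] by exists n0; apply/asboolP.
  case: (ex_minnP exP) => m /asboolP [mp [dm Mdm]] mmin.
  have [e [De edm]] := divDp (DM _ Mdm) mp.
  exists m, dm, e; split=> //; split=> //; split=> // n [d Md].
  have hmod : dom (n %% m)%N.
    exists (d - dm *+ (n %/ m)); have := sgB sM Md (sgMn (n %/ m) sM Mdm).
    have e1 : a *+ n - a *+ m *+ (n %/ m) = a *+ (n %% m).
      by rewrite -mulrnA {1}(divn_eq n m) mulrnDr mulnC addrAC subrr add0r.
    by rewrite pairMn pairB e1.
  rewrite /dvdn; apply/eqP.
  case: (posnP (n %% m)) => [//|pos].
  have := mmin (n %% m)%N (introT (asboolP _) (conj pos hmod)).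
  by rewrite leqNgt ltn_pmod.
have keyn n d : M (a *+ n, d) -> d = e *+ n.
  move=> Mn; have /dvdnP [q nq] := mdiv n (ex_intro _ d Mn).
  have Mq := sgMn q sM Mm; rewrite pairMn -mulrnA mulnC -nq in Mq.
  by have /= -> := Mfun _ _ Mn Mq erefl; rewrite -edm -mulrnA mulnC -nq.
have key k d : M (a *~ k, d) -> d = e *~ k.
  case: k => n; first by rewrite -!pmulrn; apply: keyn.
  rewrite !NegzE !mulrNz -!pmulrn => Mn; have := sgN sM Mn; rewrite pairN opprK => /keyn.
  by move=> <-; rewrite opprK.
pose M' p := exists q k, M q /\ p = (q.1 + a *~ k, q.2 + e *~ k).
exists M'; split.
- split.
  + split; first by exists 0, 0; split; [apply: sg0|rewrite !mulr0z !addr0].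
    move=> _ _ [q [k [Mq ->]]] [q' [k' [Mq' ->]]].
    exists (q - q'), (k - k'); split; first by apply: sgB.
    by rewrite pairB !addrBB !mulrzBr.
  + move=> d [q [k [Mq [e1 e2]]]].
    have Mq' := sgN sM Mq.
    have : M (a *~ k, - q.2) by move: Mq'; case: q {Mq} e1 e2 => x y /= e1 e2; rewrite -[a *~ k]opprK -(addrK (a *~ k) x) -e1 sub0r.
    by move/key => h; rewrite e2 -h addrN.
  + by move=> _ [q [k [Mq ->]]] /=; apply: sgD => //; [apply: DM|apply: sgMz => //].
  + by move=> x bx; exists (x, f x), 0; split; [apply: BM|rewrite !mulr0z !addr0].
- by move=> p Mp; exists p, 0; split=> //; rewrite !mulr0z !addr0; case: p {Mp}.
- by exists e, 0, 1; split; [apply: sg0|rewrite !mulr1z !add0r].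
Qed.

Lemma baer_ext : exists F : A -> D, (forall x y, F (x - y) = F x - F y) /\
  (forall x, Dp (F x)) /\ (forall x, B x -> F x = f x).
Proof.
have [M [PM maxM]] := zorn_sets P0 Pch.
have dom a : exists d, M (a, d).
  apply: contrapT => na; have [M' [PM' MM' [e M'e]]] := extend PM na.
  by apply: na; exists e; apply: (maxM _ PM' MM').
case: PM => sM fM DM BM.
have Mfun x d d' : M (x, d) -> M (x, d') -> d = d'.
  move=> h1 h2; apply/eqP; rewrite -subr_eq0; apply/eqP; apply: fM.
  by have := sgB sM h1 h2; rewrite pairB subrr.
pose F x := sval (cid (dom x)).
have MF x : M (x, F x) by rewrite /F; case: (cid _).
exists F; split; [|split].
- by move=> x y; apply: (Mfun (x - y)) => //; apply: (sgB sM (MF x) (MF y)).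
- by move=> x; apply: (DM (x, F x)).
- by move=> x bx; apply: (Mfun x) => //; apply: BM.
Qed.
End Baer.
Section Dep.
Variable R : zmodType.

Lemma mulrzE1 (u : R) (p q : int) : u *~ (p * q) = u *~ q *~ p.
Proof. by rewrite mulrzA_C. Qed.

Lemma dep (k : nat) : forall (J : seq nat) (y : nat -> R) (m : nat -> int)
  (a : nat -> nat -> int) (x : nat -> R),
  uniq J -> size J = k.+1 -> (forall j, j \in J -> m j != 0) ->
  (forall j, j \in J -> y j *~ m j = \sum_(i < k) x i *~ a j i) ->
  exists c : nat -> int, (exists2 j, j \in J & c j != 0) /\ \sum_(j <- J) y j *~ c j = 0.
Proof.
elim: k => [|k IH] J y m a x uJ sJ mnz hy.
  case: J uJ sJ mnz hy => [|j [|]] //= _ _ mnz hy.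
  exists m; split; first by exists j; [rewrite inE|apply: mnz; rewrite inE].
  by rewrite big_seq1 hy ?inE // big_ord0.
have [[j0 j0J aj0]|nex] := pselect (exists2 j, j \in J & a j k != 0); last first.
  case: J uJ sJ mnz hy nex => [|j1 J'] //= /andP [j1J' uJ'] [sJ'] mnz hy nex.
  have [||c [[j jJ cj] hc]] := IH J' y m a x uJ' sJ'.
  - by move=> j jJ; apply: mnz; rewrite inE jJ orbT.
  - move=> j jJ; rewrite hy ?inE ?jJ ?orbT // big_ord_recr /=.
    have -> : a j k = 0.
      apply/eqP; apply/negPn/negP => h; apply: nex; exists j => //.
      by rewrite inE jJ orbT.
    by rewrite mulr0z addr0.
  exists (fun j => if j \in J' then c j else 0); split.
    by exists j; rewrite ?inE ?jJ ?orbT.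
  rewrite big_cons (negbTE j1J') mulr0z add0r -[RHS]hc.
  by apply: eq_big_seq => j2 j2J; rewrite j2J.
pose J' := rem j0 J.
have uJ' : uniq J' by apply: rem_uniq.
have sJ' : size J' = k.+1 by rewrite size_rem // sJ.
have J'J j : j \in J' -> j \in J by move=> h; apply: (mem_rem h).
have j0J' : j0 \notin J' by rewrite mem_rem_uniqF.
pose y2 j := y j *~ (a j0 k * m j) - y j0 *~ (a j k * m j0).
pose a2 j i := a j0 k * a j i - a j k * a j0 i.
have [||c [[j1 j1J c1] hc]] := IH J' y2 (fun _ => 1) a2 x uJ' sJ'.
- by move=> j _; rewrite oner_eq0.
- move=> j jJ; rewrite mulr1z /y2 !mulrzE1 (hy j (J'J _ jJ)) (hy j0 j0J).
  rewrite !big_ord_recr /= !mulrzDl !mulrz_suml /a2.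
  under [in RHS]eq_bigr => i _ do rewrite mulrzBr !mulrzE1.
  rewrite sumrB addrBB.
  have -> : x k *~ a j k *~ a j0 k = x k *~ a j0 k *~ a j k by rewrite mulrzAC.
  by rewrite subrr addr0.
exists (fun j => if j == j0 then - \sum_(j' <- J') c j' * a j' k * m j0
                 else c j * (a j0 k * m j)); split.
  exists j1; first by apply: J'J.
  have -> : (j1 == j0) = false by apply/negbTE; apply: contraNneq j0J' => <-.
  by rewrite !mulf_neq0 // mnz // J'J.
rewrite (big_rem j0 j0J) /= eqxx /=.
rewrite (eq_big_seq (fun j => y j *~ (c j * (a j0 k * m j)))); last first.
  move=> j jJ; have -> // : (j == j0) = false.
  by apply/negbTE; apply: contraNneq j0J' => <-.
have hc2 : \sum_(j <- J') y j *~ (c j * (a j0 k * m j))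
    - \sum_(j <- J') y j0 *~ (c j * a j k * m j0) = 0.
  rewrite -[RHS]hc -sumrB; apply: eq_bigr => j _; by rewrite /y2 mulrzBl !mulrzA_C !mulrA.
by rewrite (mulrNz (y j0) (\sum_(j' <- J') c j' * a j' k * m j0)) mulrz_sumr addrC.
Qed.
End Dep.
Definition indep_seq (R : zmodType) (x : nat -> R) (N : nat) :=
  forall k : nat -> int, \sum_(i < N) x i *~ k i = 0 -> forall i, (i < N)%N -> k i = 0.

Definition upd (R : Type) (s : nat -> R) (N : nat) (y : R) : nat -> R :=
  fun i => if i == N then y else s i.

Lemma tf_int (R : zmodType) : torsion_free R -> forall (r : R) (k : int), r *~ k = 0 -> r = 0 \/ k = 0.
Proof.
move=> tf r [] n.
  case: n => [|n]; first by right.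
  by rewrite -pmulrn => h; left; apply: (tf r n.+1).
by rewrite NegzE mulrNz -pmulrn => /eqP; rewrite oppr_eq0 => /eqP h; left; apply: (tf r n.+1).
Qed.

Section Ext.
Variable R : zmodType.
Hypothesis tfR : torsion_free R.

Lemma extend_seq (x : nat -> R) (N : nat) : indep_seq x N ->
  (exists f : 'I_N.+1 -> R, independent f) ->
  exists y, indep_seq (upd x N y) N.+1.
Proof.
move=> ix [f [fnz fi]].
apply: contrapT => hno.
have hK j : exists k : nat -> int, \sum_(i < N.+1) upd x N (f (inord j)) i *~ k i = 0 /\
    exists2 i, (i < N.+1)%N & k i <> 0.
  apply: contrapT => hn; apply: hno; exists (f (inord j)) => k hk i iN.
  apply: contrapT => ki; apply: hn; exists k; split=> //; by exists i.
pose K j := sval (cid (hK j)).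
have KP j : \sum_(i < N.+1) upd x N (f (inord j)) i *~ K j i = 0 /\
    exists2 i, (i < N.+1)%N & K j i <> 0 by rewrite /K; case: (cid _).
have KE j : \sum_(i < N) x i *~ K j i + f (inord j) *~ K j N = 0.
  have [h _] := KP j; rewrite big_ord_recr /= /upd eqxx in h.
  rewrite -[RHS]h; congr (_ + _); apply: eq_bigr => i _ /=.
  by rewrite ifN // neq_ltn ltn_ord.
have KN j : K j N != 0.
  apply/eqP => h0; have [_ [i iN ki]] := KP j; apply: ki.
  have := KE j; rewrite h0 mulr0z addr0 => /ix hi.
  move: iN; rewrite ltnS leq_eqVlt => /orP [/eqP ->//|]; exact: hi.
have [||c [[j jJ cj] hc]] := @dep R N (iota 0 N.+1) (fun j => f (inord j)) (fun j => K j N)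
    (fun j i => - K j i) x (iota_uniq 0 N.+1) (size_iota 0 N.+1).
- by move=> j _; apply: KN.
- move=> j _; under eq_bigr => i _ do rewrite mulrNz.
  rewrite sumrN; apply: (addrI (\sum_(i < N) x i *~ K j i)).
  by rewrite KE subrr.
have hc' : \sum_(j < N.+1) f j *~ c j = 0.
  rewrite -[RHS]hc [in RHS](_ : iota 0 N.+1 = index_iota 0 N.+1) ?big_mkord; last first.
    by rewrite /index_iota subn0.
  by apply: eq_bigr => j2 _; rewrite inord_val.
have := fi c hc' (inord j); move: jJ; rewrite mem_iota add0n => jN.
rewrite inordK // => /(tf_int tfR) [h|h]; [exact: (fnz _ h) | by move/eqP: cj].
Qed.

Fixpoint Xseq (n : nat) : nat -> R :=
  match n with
  | 0 => fun _ => 0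
  | n.+1 => let s := Xseq n in
      match pselect (exists y, indep_seq (upd s n y) n.+1) with
      | left h => upd s n (sval (cid h))
      | right _ => s
      end
  end.

Lemma Xseq_stable n i : (i < n)%N -> Xseq n.+1 i = Xseq n i.
Proof.
move=> iN /=; case: pselect => // h.
by rewrite /upd ifN // neq_ltn iN.
Qed.

Lemma Xseq_stable2 n m i : (i < n)%N -> (n <= m)%N -> Xseq m i = Xseq n i.
Proof.
move=> iN; elim: m => [|m IH]; first by rewrite leqn0 => /eqP ->.
rewrite leq_eqVlt => /orP [/eqP ->//|]; rewrite ltnS => nm.
by rewrite Xseq_stable ?IH // (leq_trans iN nm).
Qed.

Lemma inf_seq : infinite_rank R -> exists x : nat -> R, forall N, indep_seq x N.
Proof.
move=> ir.
have inv n : indep_seq (Xseq n) n.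
  elim: n => [|n IH]; first by move=> k _ i.
  have [y hy] := extend_seq IH (ir n.+1).
  rewrite /=; case: pselect => [h|h]; last by exfalso; apply: h; exists y.
  by case: (cid h).
exists (fun i => Xseq i.+1 i) => N k hk.
apply: inv; rewrite -[RHS]hk; apply: eq_bigr => i _.
by rewrite (Xseq_stable2 (ltnSn i) (ltn_ord i)).
Qed.
End Ext.
Lemma idt (W : zmodType) (a b c d : W) : (c - d) + ((a - c) - (b - d)) = a - b.
Proof. by rewrite opprB addrCA subrKA subrKA. Qed.

Section Addf.
Variables (U W : zmodType) (Fh : U -> W).
Hypothesis hF : forall a b, Fh (a - b) = Fh a - Fh b.
Lemma addf0 : Fh 0 = 0. Proof. by rewrite -(subrr 0) hF subrr. Qed.
Lemma addfN a : Fh (- a) = - Fh a. Proof. by rewrite -sub0r hF addf0 sub0r. Qed.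
Lemma addfD a b : Fh (a + b) = Fh a + Fh b.
Proof. by rewrite -{1}[b]opprK hF addfN opprK. Qed.
Lemma addfMn a n : Fh (a *+ n) = Fh a *+ n.
Proof. by elim: n => [|n IH]; rewrite ?mulr0n ?addf0 // !mulrS addfD IH. Qed.
Lemma addfMz a k : Fh (a *~ k) = Fh a *~ k.
Proof. case: k => n; first by rewrite -!pmulrn addfMn.
by rewrite !NegzE !mulrNz addfN -!pmulrn addfMn. Qed.
Lemma addf_sum (I : Type) (r : seq I) (P : pred I) (F : I -> U) :
  Fh (\sum_(i <- r | P i) F i) = \sum_(i <- r | P i) Fh (F i).
Proof. by elim/big_rec2: _ => [|i y1 y2 _ <-]; rewrite ?addf0 ?addfD. Qed.
End Addf.

Definition combo (W : zmodType) (w : nat -> W) (N : nat) (k : nat -> int) :=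
  \sum_(i < N) w i *~ k i.
Definition pad (k : nat -> int) (N : nat) : nat -> int := fun i => if (i < N)%N then k i else 0.

Lemma combo_pad (W : zmodType) (w : nat -> W) N L k : (N <= L)%N -> combo w N k = combo w L (pad k N).
Proof.
move=> NL; rewrite /combo (big_ord_widen _ (fun i => w i *~ k i) NL) big_mkcond.
by apply: eq_bigr => i _; rewrite /pad; case: ifP => _ //; rewrite mulr0z.
Qed.

Lemma comboB (W : zmodType) (w : nat -> W) N k k' :
  combo w N k - combo w N k' = combo w N (fun i => k i - k' i).
Proof. by rewrite /combo -sumrB; apply: eq_bigr => i _; rewrite mulrzBr. Qed.

Lemma combo_delta (W : zmodType) (w : nat -> W) i :
  combo w i.+1 (fun j => (nat_of_bool (j == i))%:Z) = w i.
Proof.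
rewrite /combo big_ord_recr /= eqxx mulr1z big1 ?add0r // => j _.
by rewrite (ltn_eqF (ltn_ord j)) mulr0z.
Qed.

Lemma combo_map (U W : zmodType) (Fh : U -> W) (w : nat -> U) N k :
  (forall a b, Fh (a - b) = Fh a - Fh b) -> Fh (combo w N k) = combo (fun i => Fh (w i)) N k.
Proof. by move=> hF; rewrite /combo addf_sum //; apply: eq_bigr => i _; rewrite addfMz. Qed.

Section PartC.
Variables (T R : zmodType).
Hypotheses (tT : torsion_group T) (tfR : torsion_free R).
Variable x : nat -> R.
Hypothesis ix : forall N, indep_seq x N.

Lemma combo_eq N M k k' : combo x N k = combo x M k' -> forall i, pad k N i = pad k' M i.
Proof.
rewrite (combo_pad x k (leq_maxl N M)) (combo_pad x k' (leq_maxr N M)) => e.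
have h0 : combo x (maxn N M) (fun i => pad k N i - pad k' M i) = 0 by rewrite -comboB e subrr.
move=> i; have h := ix h0.
case: (ltnP i (maxn N M)) => iL.
  by apply/eqP; rewrite -subr_eq0; apply/eqP; apply: h.
rewrite /pad !ifN // -leqNgt; [exact: leq_trans (leq_maxr N M) iL|exact: leq_trans (leq_maxl N M) iL].
Qed.

Definition F0 (y : R) := exists p : nat * (nat -> int), y = combo x p.1 p.2.

Lemma F0_sub : subgroup F0.
Proof.
split; first by exists (0%N, fun _ => 0); rewrite /combo big_ord0.
move=> _ _ [[N k] ->] [[M k'] ->] /=.
exists (maxn N M, fun i => pad k N i - pad k' M i) => /=.
by rewrite (combo_pad x k (leq_maxl N M)) (combo_pad x k' (leq_maxr N M)) comboB.
Qed.

Lemma F0x i : F0 (x i).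
Proof. by exists (i.+1, fun j => (nat_of_bool (j == i))%:Z); rewrite combo_delta. Qed.

Definition lin (W : zmodType) (w : nat -> W) (y : R) : W :=
  match pselect (F0 y) with
  | left h => let p := sval (cid h) in combo w p.1 p.2
  | right _ => 0
  end.

Lemma lin_combo (W : zmodType) (w : nat -> W) N k : lin w (combo x N k) = combo w N k.
Proof.
rewrite /lin; case: pselect => [h|h]; last by exfalso; apply: h; exists (N, k).
case: (cid h) => [[N' k'] /= e]; have hp := combo_eq e.
rewrite (combo_pad w k' (leq_maxl N' N)) (combo_pad w k (leq_maxr N' N)).
by apply: eq_bigr => i _; rewrite hp.
Qed.

Lemma lin_add (W : zmodType) (w : nat -> W) y y' : F0 y -> F0 y' ->
  lin w (y - y') = lin w y - lin w y'.
Proof.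
move=> [[N k] ->] [[M k'] ->] /=.
rewrite !lin_combo (combo_pad x k (leq_maxl N M)) (combo_pad x k' (leq_maxr N M)) comboB.
by rewrite lin_combo (combo_pad w k (leq_maxl N M)) (combo_pad w k' (leq_maxr N M)) comboB.
Qed.

Lemma baer_lin (W : zmodType) (w : nat -> W) :
  (forall (d : W) n, (0 < n)%N -> exists e, e *+ n = d) ->
  exists Fh : R -> W, (forall a b, Fh (a - b) = Fh a - Fh b) /\
    forall N k, Fh (combo x N k) = combo w N k.
Proof.
move=> divW.
have [] := @baer_ext R W (fun _ => True) F0 (lin w).
- by split.
- by move=> d n _ n0; have [e he] := divW d n n0; exists e.
- exact: F0_sub.
- by [].
- by move=> a b; apply: lin_add.
move=> Fh [hF [_ hB]]; exists Fh; split=> // N k.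
by rewrite hB ?lin_combo //; exists (N, k).
Qed.

Lemma Fh_x (W : zmodType) (w : nat -> W) (Fh : R -> W) :
  (forall a b, Fh (a - b) = Fh a - Fh b) -> (forall N k, Fh (combo x N k) = combo w N k) ->
  forall i, Fh (x i) = w i.
Proof. by move=> hF hc i; rewrite -(combo_delta x i) hc combo_delta. Qed.

Lemma div_rat : forall (d : rat) n, (0 < n)%N -> exists e, e *+ n = d.
Proof.
move=> d n n0; exists (d / n%:R).
by rewrite -(mulr_natr (d / n%:R)) divfK // pnatr_eq0 -lt0n.
Qed.

Lemma div_poly : forall (d : {poly rat}) n, (0 < n)%N -> exists e, e *+ n = d.
Proof.
move=> d n n0; exists ((n%:R)^-1 *: d).
by rewrite scalerMnl -(mulr_natr (n%:R)^-1) mulVf ?scale1r // pnatr_eq0 -lt0n.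
Qed.

Definition vpol (j : nat) : {poly rat} := Poly (odflt [::] (unpickle j)).
Lemma vpol_surj (p : {poly rat}) : vpol (pickle (polyseq p)) = p.
Proof. by rewrite /vpol pickleK /= polyseqK. Qed.

Lemma Xcombo_inj N k : combo (fun i => 'X^i : {poly rat}) N k = 0 -> forall i, (i < N)%N -> k i = 0.
Proof.
have e : combo (fun i => 'X^i : {poly rat}) N k = \poly_(i < N) (k i)%:~R.
  by rewrite poly_def /combo; apply: eq_bigr => i _; rewrite scaler_int.
rewrite e => h i iN; move/(congr1 (fun p : {poly rat} => p`_i)): h.
by rewrite coef_poly iN coef0 => /eqP; rewrite intr_eq0 => /eqP.
Qed.

Lemma not_sgb (c : T) (n : nat) : (0 < n)%N -> (forall y, y *+ n != c) ->
  ~ semi_generalized_Bassian (T * R)%type.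
Proof.
move=> n0 nc sgb.
have [Lam [hL cL]] := baer_lin (fun i => if i == 0%N then - (n%:R)^-1 else 0 : rat) div_rat.
have [Th [hT cT]] := baer_lin (fun i => if i is j.+1 then vpol j else 0) div_poly.
have [Ka [hK cK]] := baer_lin (fun i => 'X^i : {poly rat}) div_poly.
have Lx0 : Lam (x 0) = - (n%:R)^-1 by rewrite (Fh_x hL cL).
have LxS j : Lam (x j.+1) = 0 by rewrite (Fh_x hL cL).
have Tx0 : Th (x 0) = 0 by rewrite (Fh_x hT cT).
have TxS j : Th (x j.+1) = vpol j by rewrite (Fh_x hT cT).
pose jx y := pickle (polyseq (Ka y - Th y)).
have vj y : Th (x (jx y).+1) = Ka y - Th y by rewrite TxS vpol_surj.
pose g (p : T * R) : T * R := (p.1, p.2 + x (jx p.2).+1).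
pose H (p : T * R) := [/\ F0 p.2, Th p.2 = 0 & exists k : int, p.1 = c *~ k /\ Lam p.2 = - k%:~R].
have sF := F0_sub.
have sH : subgroup H.
  split.
    split; [exact: sg0|exact: (addf0 hT)|exists 0; split; first by rewrite mulr0z].
    by rewrite (addf0 hL) mulr0z oppr0.
  move=> [p1 p2] [q1 q2] [/= F0p Tp [k [ep Lp]]] [/= F0q Tq [k' [eq Lq]]].
  split => /=; [exact: sgB | by rewrite hT Tp Tq subrr|].
  exists (k - k'); split; first by rewrite ep eq mulrzBr.
  by rewrite hL Lp Lq intrB opprB opprK addrC.
have hinj : inj_hom_into_quotient H.
  exists g; split.
    move=> [p1 p2] [q1 q2].
    change (H (p1 + q1 - (p1 + q1), (p2 + q2 + x (jx (p2 + q2)).+1) -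
       ((p2 + x (jx p2).+1) + (q2 + x (jx q2).+1)))).
    have e1 : p2 + q2 + x (jx (p2 + q2)).+1 - (p2 + x (jx p2).+1 + (q2 + x (jx q2).+1)) =
        x (jx (p2 + q2)).+1 - (x (jx p2).+1 + x (jx q2).+1).
      by rewrite [_ + (q2 + _)]addrACA addrBB subrr add0r.
    rewrite e1 subrr; split => /=.
    - by apply: sgB => //; [exact: F0x | apply: sgD => //; exact: F0x].
    - by rewrite hT (addfD hT) !vj (addfD hK) (addfD hT) -addrBB subrr.
    - exists 0; split; first by rewrite mulr0z.
      by rewrite hL (addfD hL) !LxS mulr0z ?addr0 ?oppr0 ?subrr ?addr0.
  move=> [p1 p2] [q1 q2].
  change (H (p1 - q1, (p2 + x (jx p2).+1) - (q2 + x (jx q2).+1)) -> (p1, p2) = (q1, q2)).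
  move=> -[/= F0w Tw [k [ek Lk]]].
  rewrite addrBB in F0w Tw Lk.
  have F0d : F0 (p2 - q2).
    have := sgB sF F0w (sgB sF (F0x (jx p2).+1) (F0x (jx q2).+1)).
    by rewrite addrK.
  have Kd : Ka (p2 - q2) = 0.
    move: Tw; rewrite (addfD hT) (hT (x _)) !vj (hT p2) (hK p2) => <-.
    by rewrite idt.
  have d0 : p2 - q2 = 0.
    case: F0d => [[N kk] /= ed]; move: Kd; rewrite ed cK => /Xcombo_inj hk.
    by rewrite /combo big1 // => i _; rewrite hk // mulr0z.
  have e2 : p2 = q2 by apply/eqP; rewrite -subr_eq0 d0.
  move: Lk ek; rewrite e2 !subrr addr0 (addf0 hL) => /eqP; rewrite eq_sym oppr_eq0 intr_eq0 => /eqP ->.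
  by rewrite mulr0z => /eqP; rewrite subr_eq0 => /eqP ->.
have [D [[sD [C [sC [DC dec]]]] ess]] := sgb H sH hinj.
have [HD ed] := essE_of sD ess.
have Htf p : H p -> forall N, (0 < N)%N -> p *+ N = 0 -> p = 0.
  case: p => [p1 p2] [_ _ [k [/= ek /= Lk]]] N N0; rewrite pairMn => -[e1 e2].
  have p20 : p2 = 0 by apply: (tfR N0 e2).
  move: Lk; rewrite p20 (addf0 hL) => /eqP; rewrite eq_sym oppr_eq0 intr_eq0 => /eqP k0.
  by rewrite ek k0 mulr0z ?p20.
have Dtf d : D d -> forall N, (0 < N)%N -> d *+ N = 0 -> d = 0.
  move=> Dd N N0 dN; apply: contrapT => dnz.
  have [k [Hk nk]] := ed d Dd dnz; apply: nk; apply: (Htf _ Hk N N0).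
  by rewrite pmulrn mulrzAC -(pmulrn d) dN mul0rz.
have Cc : C (c, 0).
  have [d0 [c0 [Dd0 [Cc0 e0]]]] := dec (c, 0).
  have [N [N0 cN]] := tT c.
  have e3 : d0 *+ N = - (c0 *+ N).
    apply/eqP; rewrite -subr_eq0 opprK -mulrnDl -e0 pairMn cN mul0rn.
    by [].
  have d0N : d0 *+ N = 0 by apply: DC; [apply: sgMn | rewrite e3; apply: sgN => //; apply: sgMn].
  by move: e0; rewrite (Dtf _ Dd0 N N0 d0N) add0r => ->.
have Hc : H (c, x 0 *+ n).
  split => /=.
  - by apply: sgMn => //; exact: F0x.
  - by rewrite (addfMn hT) Tx0 mul0rn.
  - exists 1; split; first by rewrite mulr1z.
    rewrite (addfMn hL) Lx0 mulNrn -(mulr_natr (n%:R)^-1) mulVf; first by rewrite mulr1z.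
    by rewrite pnatr_eq0 -lt0n.
have [d1 [c1 [Dd1 [Cc1 e1]]]] := dec (0, x 0).
have e4 : (c, x 0 *+ n) - d1 *+ n = (c, 0) + c1 *+ n.
  have -> : ((c, x 0 *+ n) : T * R) = (c, 0) + (0, x 0) *+ n by rewrite pairMn pairD mul0rn addr0 add0r.
  by rewrite e1 mulrnDl addrA addrAC addrK.
have : (c, 0) + c1 *+ n = 0.
  by apply: DC; [rewrite -e4; apply: sgB => //; [apply: HD|apply: sgMn] | apply: sgD => //; apply: sgMn].
case: c1 {Cc1 e1 e4} => a b; rewrite pairMn pairD => -[ca _].
by move/eqP: (nc (- a)); apply; rewrite mulNrn; apply/eqP; rewrite eq_sym -addr_eq0 ca.
Qed.
End PartC.
Lemma subrBB (W : zmodType) (a b c d : W) : (a - b) - (c - d) = (a - c) - (b - d).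
Proof. by rewrite addrBB; congr (_ + _); rewrite opprB opprK addrC. Qed.
Lemma alg2 (W : zmodType) (A B C D : W) : (A - (B + C)) + (C - D) = A - (B + D).
Proof. by rewrite opprD [A + _]addrA subrKA -addrA -opprD. Qed.

Section GMap.
Variables (V : zmodType) (H : V -> Prop) (g : V -> V).
Hypotheses (sH : subgroup H) (hadd : forall x y, H (g (x + y) - (g x + g y))).

Lemma gm0 : H (g 0).
Proof.
have := hadd 0 0; rewrite addr0 opprD addrA subrr add0r => /(sgN sH).
by rewrite opprK.
Qed.

Lemma gmN x : H (g (- x) + g x).
Proof.
have := sgB sH gm0 (hadd x (- x)); rewrite subrr opprB addrC subrK.
by rewrite addrC.
Qed.

Lemma gmMn x n : H (g (x *+ n) - g x *+ n).
Proof.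
elim: n => [|n IH]; first by rewrite !mulr0n subr0; exact: gm0.
by have := sgD sH (hadd x (x *+ n)) IH; rewrite alg2 -!mulrS.
Qed.

Lemma gmMz x k : H (g (x *~ k) - g x *~ k).
Proof.
case: k => n; first by rewrite -!pmulrn; exact: gmMn.
rewrite !NegzE !mulrNz -!pmulrn.
have := sgB sH (gmN (x *+ n.+1)) (gmMn x n.+1).
by rewrite opprB addrA addrAC addrK opprK.
Qed.

Lemma gsum (I : Type) (r : seq I) (F : I -> V) :
  H (g (\sum_(i <- r) F i) - \sum_(i <- r) g (F i)).
Proof.
elim: r => [|a r IH]; first by rewrite !big_nil subr0; exact: gm0.
by rewrite !big_cons; have := sgD sH (hadd (F a) (\sum_(i <- r) F i)) IH; rewrite alg2.
Qed.
End GMap.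

Section Main.
Variables (T R : zmodType).
Hypotheses (tT : torsion_group T) (tfR : torsion_free R).

Lemma partB1 : semi_generalized_Bassian (T * R)%type -> semi_generalized_Bassian T.
Proof.
move=> sgb HT sHT [gT [haddT hinjT]].
pose HG (p : T * R) := HT p.1 /\ p.2 = 0.
have sHG : subgroup HG.
  split; first by split; [exact: sg0|].
  by move=> [p1 p2] [q1 q2] [/= h1 ->] [/= h2 ->]; split; [exact: sgB|rewrite /= subrr].
have hinj : inj_hom_into_quotient HG.
  exists (fun p => (gT p.1, p.2)); split.
    by move=> [p1 p2] [q1 q2]; split; [exact: haddT|rewrite /= subrr].
  move=> [p1 p2] [q1 q2] [/= h1 h2].
  rewrite (hinjT _ _ h1); congr pair; apply/eqP; rewrite -subr_eq0; exact/eqP.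
have [D [[sD [C [sC [DC dec]]]] ess]] := sgb HG sHG hinj.
have [HD ed] := essE_of sD ess.
have D2 d : D d -> d.2 = 0.
  move=> Dd; apply: contrapT => d2.
  have dnz : d <> 0 by move=> e; apply: d2; rewrite e.
  have [k [[_ hk] nk]] := ed d Dd dnz.
  rewrite sndMz in hk; case: (tf_int tfR hk) => // k0.
  by apply: nk; rewrite k0 mulr0z.
exists (fun t => D (t, 0)); split.
  split.
    by split; [exact: (sg0 sD)| move=> a b Da Db; have := sgB sD Da Db; rewrite pairB subrr].
  exists (fun t => C (t, 0)); split.
    by split; [exact: (sg0 sC)| move=> a b Ca Cb; have := sgB sC Ca Cb; rewrite pairB subrr].
  split; first by move=> t Dt Ct; have := DC _ Dt Ct => -[].
  move=> t; have [d [c [Dd [Cc e]]]] := dec (t, 0).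
  have d2 := D2 _ Dd.
  have c2 : c.2 = 0 by move: e => /(congr1 snd) /=; rewrite d2 add0r => <-.
  exists d.1, c.1; split; first by rewrite -d2; case: d Dd {e d2}.
  split; first by rewrite -c2; case: c Cc {e c2}.
  by move: e => /(congr1 fst).
apply: ess_of; split; first by move=> t Ht; apply: HD.
move=> t Dt tnz.
have [|k [[hk _] nk]] := ed (t, 0) Dt; first by move=> [].
exists k; split; first by rewrite fstMz in hk.
by move=> e; apply: nk; rewrite pairMz e mul0rz.
Qed.

Lemma partB2 : semi_generalized_Bassian (T * R)%type -> semi_generalized_Bassian R.
Proof.
move=> sgb HR sHR [gR [haddR hinjR]].
pose HG (p : T * R) := p.1 = 0 /\ HR p.2.
have sHG : subgroup HG.
  split; first by split; [|exact: sg0].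
  by move=> [p1 p2] [q1 q2] [/= -> h1] [/= -> h2]; split; [rewrite /= subrr|exact: sgB].
have hinj : inj_hom_into_quotient HG.
  exists (fun p => (p.1, gR p.2)); split.
    by move=> [p1 p2] [q1 q2]; split; [rewrite /= subrr|exact: haddR].
  move=> [p1 p2] [q1 q2] [/= h1 h2].
  rewrite (hinjR _ _ h2); congr pair; apply/eqP; rewrite -subr_eq0; exact/eqP.
have [D [[sD [C [sC [DC dec]]]] ess]] := sgb HG sHG hinj.
have [HD ed] := essE_of sD ess.
have Dtf d : D d -> forall N, (0 < N)%N -> d *+ N = 0 -> d = 0.
  move=> Dd N N0 dN; apply: contrapT => dnz.
  have [k [[h1 h2] nk]] := ed d Dd dnz; apply: nk.
  have e2 : (d *~ k).2 *+ N = 0 by rewrite -sndMn pmulrn mulrzAC -(pmulrn d) dN mul0rz.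
  have := tfR N0 e2; case: (d *~ k) h1 => a b /= -> ->; by [].
have TC t : C (t, 0).
  have [d [c [Dd [Cc e]]]] := dec (t, 0).
  have [N [N0 tN]] := tT t.
  have e3 : d *+ N = - (c *+ N).
    apply/eqP; rewrite -subr_eq0 opprK -mulrnDl -e pairMn tN mul0rn.
    by [].
  have dN : d *+ N = 0 by apply: DC; [apply: sgMn | rewrite e3; apply: sgN => //; apply: sgMn].
  by rewrite e (Dtf _ Dd N N0 dN) add0r.
exists (fun r => exists t, D (t, r)); split.
  split.
    split; first by exists 0; exact: (sg0 sD).
    by move=> a b [t Da] [s Db]; exists (t - s); have := sgB sD Da Db; rewrite pairB.
  exists (fun r => C (0, r)); split.
    by split; [exact: (sg0 sC)| move=> a b Ca Cb; have := sgB sC Ca Cb; rewrite pairB subrr].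
  split.
    move=> r [t Dt] Cr.
    have Ctr : C (t, r) by have := sgD sC (TC t) Cr; rewrite pairD addr0 add0r.
    by have := DC _ Dt Ctr => -[].
  move=> r; have [d [c [Dd [Cc e]]]] := dec (0, r).
  exists d.2, c.2; split; first by exists d.1; case: d Dd {e}.
  split; last by move: e => /(congr1 snd).
  have := sgB sC Cc (TC c.1); rewrite [c]surjective_pairing pairB subrr.
  by rewrite subr0.
apply: ess_of; split; first by move=> r Hr; exists 0; apply: HD.
move=> r [t Dtr] rnz.
have [|k [[h1 h2] nk]] := ed (t, r) Dtr; first by move=> [].
exists k; split; first by rewrite sndMz in h2.
by move=> e; apply: nk; rewrite pairMz e; rewrite fstMz in h1; rewrite h1.
Qed.

End Main.
Section MainD.
Variables (T R : zmodType).
Hypotheses (tT : torsion_group T) (tfR : torsion_free R).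

Lemma widen_unlift m (j : 'I_m) : unlift ord_max (widen_ord (leqnSn m) j) = Some j.
Proof.
have -> : widen_ord (leqnSn m) j = lift ord_max j by apply: val_inj; rewrite /= /bump leqNgt ltn_ord.
by rewrite liftK.
Qed.

Lemma partD : semi_generalized_Bassian T -> ~ infinite_rank R ->
  semi_generalized_Bassian (T * R)%type.
Proof.
move=> sT nir H sH [g [hadd hinj]].
have H2 h : H h -> h.2 = 0.
  move=> Hh; apply: contrapT => h2; apply: nir; elim => [|m [r [rnz ri]]].
    by exists (fun _ => 0); split; [case | move=> k _ []].
  pose y (j : 'I_m) := (g (0, r j)).2.
  pose f (i : 'I_m.+1) := match unlift ord_max i with Some j => y j | None => h.2 end.
  have fw j : f (widen_ord (leqnSn m) j) = y j by rewrite /f widen_unlift.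
  have fm : f ord_max = h.2 by rewrite /f unlift_none.
  have coef k : \sum_(i < m.+1) f i *~ k i = 0 -> forall i, k i = 0.
    rewrite big_ord_recr /= fm.
    under eq_bigr => j _ do rewrite fw.
    move=> hs.
    pose u := \sum_(j < m) g (0, r j) *~ k (widen_ord (leqnSn m) j) + h *~ k ord_max.
    have u2 : u.2 = 0.
      by rewrite /u /= snd_sum sndMz -[RHS]hs; congr (_ + _); apply: eq_bigr => j _; rewrite sndMz.
    have [N [N0 uN]] := tT u.1.
    have uN0 : u *+ N = 0 by rewrite [u]surjective_pairing pairMn uN u2 mul0rn.
    pose c (j : 'I_m) := k (widen_ord (leqnSn m) j) * N.
    have Hs : H (\sum_(j < m) g (0, r j) *~ c j).
      have -> : \sum_(j < m) g (0, r j) *~ c j = - ((h *~ k ord_max) *+ N).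
        apply/eqP; rewrite -addr_eq0; apply/eqP; rewrite -[RHS]uN0 /u mulrnDl -sumrMnl.
        congr (_ + _); apply: eq_bigr => j _.
        by rewrite /c mulrzA pmulrn.
      by apply: sgN => //; apply: sgMn => //; apply: sgMz.
    pose z := \sum_(j < m) ((0, r j) : T * R) *~ c j.
    have Hz : H (g z - g 0).
      apply: (sgB sH _ (gm0 sH hadd)).
      have hs1 := gsum sH hadd (index_enum 'I_m) (fun j => ((0, r j) : T * R) *~ c j).
      have hs2 : H (\sum_(j < m) g (((0, r j) : T * R) *~ c j) - \sum_(j < m) g (0, r j) *~ c j).
        by rewrite -sumrB; apply: sg_sum => // j _; apply: (gmMz sH hadd).
      have := sgD sH (sgD sH hs1 hs2) Hs.
      by rewrite /z subrKA subrK.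
    have z0 := hinj _ _ Hz.
    have zr : \sum_(j < m) r j *~ c j = 0.
      rewrite -[RHS]/((0 : T * R).2) -z0 /z snd_sum; apply: eq_bigr => j _.
      by rewrite sndMz.
    have ck j : k (widen_ord (leqnSn m) j) = 0.
      have := ri c zr j; case/(tf_int tfR) => [h0|]; first by case: (rnz j h0).
      rewrite /c => /eqP; rewrite mulf_eq0 => /orP [/eqP //|].
      by move/eqP => [] e; rewrite e in N0.
    have km : k ord_max = 0.
      move: hs; rewrite big1 ?add0r; last by move=> j _; rewrite ck mulr0z.
      by case/(tf_int tfR).
    move=> i; case: (unliftP ord_max i) => [j ->|->] //.
    have -> : lift ord_max j = widen_ord (leqnSn m) j.
      by apply: val_inj; rewrite /= /bump leqNgt ltn_ord.
    exact: ck.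
  exists f; split.
    move=> i fi; have := coef (fun j => (nat_of_bool (j == i))%:Z).
    rewrite (bigD1 i) //= eqxx mulr1z fi add0r big1 => [/(_ erefl i)|j /negbTE ->].
      by rewrite eqxx.
    by rewrite mulr0z.
  by move=> k hk i; rewrite (coef k hk i) mulr0z.
have g2 t : (g (t, 0)).2 = 0.
  have [N [N0 tN]] := tT t.
  have := sgB sH (gmMn sH hadd (t, 0) N) (gm0 sH hadd).
  rewrite pairMn tN mul0rn -pair0 addrAC subrr sub0r => /(sgN sH); rewrite opprK => /H2.
  by rewrite /= sndMn => /(tfR N0).
pose HT t := H (t, 0).
pose gT t := (g (t, 0)).1.
have gTE t : g (t, 0) = (gT t, 0) by rewrite [g _]surjective_pairing g2.
have sHT : subgroup HT.
  split; first exact: (sg0 sH).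
  by move=> a b ha hb; have := sgB sH ha hb; rewrite pairB subrr.
have [] := sT HT sHT.
  exists gT; split.
    move=> a b; have := hadd (a, 0) (b, 0); rewrite pairD addr0 !gTE pairD /= addr0 subrr.
    by [].
  move=> a b hab; have : H (g (a, 0) - g (b, 0)) by rewrite !gTE pairB subrr.
  by move/hinj => [].
move=> DT [[sDT [CT [sCT [DCT decT]]]] essT].
have [HDT edT] := essE_of sDT essT.
exists (fun p => DT p.1 /\ p.2 = 0); split.
  split.
    split; first by split; [exact: sg0|].
    by move=> [a b] [c d] [/= h1 ->] [/= h2 ->]; split; [exact: sgB|rewrite /= subrr].
  exists (fun p => CT p.1); split.
    split; first exact: (sg0 sCT).
    by move=> [a b] [c d] /= h1 h2; exact: sgB.
  split.
    by move=> [a b] [/= h1 ->] /= h2; rewrite (DCT _ h1 h2).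
  move=> [t r]; have [d [c [Dd [Cc e]]]] := decT t.
  exists (d, 0), (c, r); split=> //; split=> //.
  by rewrite pairD add0r e.
apply: ess_of; split.
  move=> [t r] Hp; have r0 := H2 _ Hp; simpl in r0; split=> //=; apply: HDT.
  by rewrite /HT -r0.
move=> [t r] [/= Dt r0] pnz.
have tnz : t <> 0 by move=> t0; apply: pnz; rewrite t0 r0.
have [k [hk nk]] := edT t Dt tnz.
exists k; rewrite pairMz r0 mul0rz; split=> //.
by move=> [].
Qed.
End MainD.
Lemma alg3 (W : zmodType) (x y z u : W) : (x - y) - (z - u) + (y - u) = x - z.
Proof. by rewrite subrBB subrK. Qed.

Lemma alg4 (W : zmodType) (a b t : W) : (a + b) + (t - a - b) = t.
Proof. by rewrite -[t - a - b]addrA -opprD addrC addNKr. Qed.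

Section MainE.
Variables (T R : zmodType).
Hypotheses (tT : torsion_group T) (tfR : torsion_free R).

Lemma partE : semi_generalized_Bassian R -> divisible T ->
  semi_generalized_Bassian (T * R)%type.
Proof.
move=> sR divT H sH [g [hadd hinj]].
pose K r := exists t, H (t, r).
have sK : subgroup K.
  split; first by exists 0; exact: (sg0 sH).
  by move=> a b [t ha] [s hb]; exists (t - s); have := sgB sH ha hb; rewrite pairB.
have injK : inj_hom_into_quotient K.
  exists (fun r => (g (0, r)).2); split.
    move=> a b; exists ((g (0, a + b) - (g (0, a) + g (0, b))).1).
    have := hadd (0, a) (0, b); rewrite pairD addr0.
    by rewrite [X in H X -> _]surjective_pairing.
  move=> a b [t ht].
  pose w := g (0, a) - g (0, b).
  have [N [N0 tN]] := tT (w.1 - t).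
  have HwN : H (w *+ N).
    have -> : w *+ N = (t, w.2) *+ N + (w - (t, w.2)) *+ N by rewrite -mulrnDl addrC subrK.
    have -> : (w - (t, w.2)) *+ N = 0.
      by rewrite [X in X - _]surjective_pairing pairB subrr pairMn tN mul0rn.
    by rewrite addr0; apply: sgMn.
  have : H (g ((0, a) *+ N) - g ((0, b) *+ N)).
    have := sgD sH (sgB sH (gmMn sH hadd (0, a) N) (gmMn sH hadd (0, b) N)) HwN.
    by rewrite /w mulrnBl alg3.
  move/hinj; rewrite !pairMn => -[] eN.
  apply/eqP; rewrite -subr_eq0; apply/eqP; apply: (tfR N0).
  by rewrite mulrnBl eN subrr.
have [ER [[sER [FR [sFR [EF decR]]]] essK]] := sR K sK injK.
have [KE edK] := essE_of sER essK.
pose HT t := H (t, 0).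
have sHT : subgroup HT.
  split; first exact: (sg0 sH).
  by move=> a b ha hb; have := sgB sH ha hb; rewrite pairB subrr.
pose P (S : T -> Prop) := subgroup S /\ essE HT S.
have P0 : P HT.
  split=> //; split=> // t ht tnz; exists 1; by rewrite mulr1z.
have Pch (F : (T -> Prop) -> Prop) : (forall X, F X -> P X) -> (exists X, F X) ->
     (forall X Y, F X -> F Y -> (forall t, X t -> Y t) \/ (forall t, Y t -> X t)) ->
     P (fun t => exists X, F X /\ X t).
  move=> FP [X0 FX0] tot; split.
    split; first by exists X0; split=> //; case: (FP _ FX0) => sX _; exact: sg0.
    move=> p q [X [FX Xp]] [Y [FY Yq]].
    have [XY|YX] := tot _ _ FX FY.
    + by exists Y; split=> //; case: (FP _ FY) => sY _; apply: sgB => //; apply: XY.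
    + by exists X; split=> //; case: (FP _ FX) => sX _; apply: sgB => //; apply: YX.
  split.
    by move=> t ht; exists X0; split=> //; case: (FP _ FX0) => _ [h _]; apply: h.
  move=> t [X [FX Xt]] tnz; case: (FP _ FX) => _ [_ h]; exact: h.
have [E [[sE [HE edE]] maxE]] := zorn_sets P0 Pch.
have Ediv_p p : prime p -> forall e, E e -> exists y, E y /\ y *+ p = e.
  move=> pp e Ee; have [y ye] := divT e p (prime_gt0 pp).
  have [Ey|nEy] := pselect (E y); first by exists y.
  pose E' w := exists e0 (k : int), E e0 /\ w = e0 + y *~ k.
  have sE' : subgroup E'.
    split; first by exists 0, 0; split; [exact: sg0|rewrite mulr0z addr0].
    move=> _ _ [e1 [k1 [E1 ->]]] [e2 [k2 [E2 ->]]].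
    by exists (e1 - e2), (k1 - k2); split; [exact: sgB|rewrite addrBB mulrzBr].
  have EE' w : E w -> E' w by move=> Ew; exists w, 0; rewrite mulr0z addr0.
  have nP : ~ P E'.
    move=> PE'; apply: nEy; apply: (maxE E' PE' EE').
    by exists 0, 1; split; [exact: sg0|rewrite add0r mulr1z].
  have [z [E'z [znz zne]]] : exists z, E' z /\ z <> 0 /\ forall j, HT (z *~ j) -> z *~ j = 0.
    apply: contrapT => hn; apply: nP; split => //; split; first by move=> w /HE /EE'.
    move=> w E'w wnz; apply: contrapT => hw; apply: hn; exists w; split=> //; split=> // j hj.
    by apply: contrapT => nj; apply: hw; exists j.
  case: E'z => e0 [k [Ee0 ze]].
  have npk : ~~ (p%:Z %| k)%Z.
    apply/negP => /dvdzP [q kq].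
    have Ez : E z.
      rewrite ze kq mulrzA mulrzAC -pmulrn ye.
      by apply: sgD => //; apply: sgMz.
    by have [j [hj nj]] := edE z Ez znz; apply: nj; apply: zne.
  have zp0 : z *+ p = 0.
    apply: contrapT => zpnz.
    have Ezp : E (z *+ p).
      rewrite ze mulrnDl (pmulrn (y *~ k)) mulrzAC -(pmulrn y) ye.
      by apply: sgD => //; [apply: sgMn|apply: sgMz].
    have [j [hj nj]] := edE _ Ezp zpnz; apply: nj.
    by have := zne (p%:Z * j); rewrite mulrzA -pmulrn; apply.
  have cp : coprime p `|k|.
    by rewrite prime_coprime //; move: npk; rewrite dvdzE absz_nat.
  have [u [v uv]] := Bezoutz k p.
  have g1 : gcdz k p = 1 by rewrite /gcdz absz_nat gcdnC; move/eqP: cp => ->.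
  rewrite g1 in uv.
  have yk : y *~ k = z - e0 by rewrite ze addrC addKr.
  have yp : y *~ p = e by rewrite -pmulrn.
  have yE : y = z *~ u + (e *~ v - e0 *~ u).
    rewrite -{1}[y]mulr1z -uv mulrzDr -mulrzA_C -(mulrzA_C v p y) yk yp mulrzBl.
    by rewrite -addrA [X in _ + X]addrC.
  exists (e *~ v - e0 *~ u); split; first by apply: sgB => //; apply: sgMz.
  have -> : e *~ v - e0 *~ u = y - z *~ u by rewrite yE addrAC subrr add0r.
  rewrite mulrnBl ye (pmulrn (z *~ u)) mulrzAC -(pmulrn z) zp0 mul0rz.
  by rewrite subr0.
have Ediv n e : (0 < n)%N -> E e -> exists y, E y /\ y *+ n = e.
  elim/ltn_ind: n e => n IH e n0 Ee.
  case: (ltnP 1 n) => [n1|n1].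
    have pp := pdiv_prime n1.
    have pgt1 := prime_gt1 pp.
    have mlt : (n %/ pdiv n < n)%N by rewrite ltn_Pdiv.
    have mgt0 : (0 < n %/ pdiv n)%N by rewrite divn_gt0 ?prime_gt0 // pdiv_leq.
    have [y1 [Ey1 y1e]] := IH _ mlt e mgt0 Ee.
    have [y [Ey yy1]] := Ediv_p _ pp y1 Ey1.
    exists y; split=> //.
    by rewrite -(divnK (pdiv_dvd n)) mulnC mulrnA yy1.
  have -> : n = 1%N by apply/eqP; rewrite eqn_leq n1 n0.
  by exists e; rewrite mulr1n.
have [pi [hpi [piE piid]]] : exists pi : T -> T, (forall a b, pi (a - b) = pi a - pi b) /\
    (forall t, E (pi t)) /\ (forall t, E t -> pi t = t).
  have [] := @baer_ext T T E E id sE _ sE (fun _ h => h) (fun _ _ _ _ => erefl).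
    by move=> d n Ed n0; apply: Ediv.
  by move=> F [h1 [h2 h3]]; exists F.
pose M t := pi t = 0.
have sM : subgroup M.
  split; first by rewrite /M (addf0 hpi).
  by move=> a b ha hb; rewrite /M hpi ha hb subrr.
have piM t : M (t - pi t) by rewrite /M hpi (piid _ (piE t)) subrr.
have divM d n : M d -> (0 < n)%N -> exists e, M e /\ e *+ n = d.
  move=> Md n0; have [t tn] := divT d n n0.
  exists (t - pi t); split=> //.
  by rewrite mulrnBl -(addfMn hpi) tn Md subr0.
pose tr r := if pselect (K r) is left h then sval (cid h) else 0.
have trH r : K r -> H (tr r, r).
  by rewrite /tr; case: pselect => // h _; case: (cid h).
pose al r := tr r - pi (tr r).
have aladd a b : K a -> K b -> al (a - b) = al a - al b.
  move=> Ka Kb.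
  have Hw : HT (tr (a - b) - (tr a - tr b)).
    have := sgB sH (trH _ (sgB sK Ka Kb)) (sgB sH (trH _ Ka) (trH _ Kb)).
    by rewrite !pairB subrr.
  apply/eqP; rewrite -subr_eq0; apply/eqP.
  rewrite /al (subrBB (tr a)) (subrBB (tr (a - b))) -(hpi (tr a)) -hpi.
  by rewrite (piid _ (HE _ Hw)) subrr.
have [alt [halt [altM altK]]] := @baer_ext R T M K al sM divM sK (fun r _ => piM _) aladd.
have alt0 : alt 0 = 0 := addf0 halt.
pose D (p : T * R) := ER p.2 /\ E (p.1 - alt p.2).
pose C (p : T * R) := M p.1 /\ FR p.2.
have HD p : H p -> D p.
  case: p => t r Hp; have Kr : K r by exists t.
  split; first exact: KE.
  rewrite /= altK // /al.
  have -> : t - (tr r - pi (tr r)) = (t - tr r) + pi (tr r) by rewrite opprB addrCA addrC.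
  apply: sgD => //; apply: HE.
  by have := sgB sH Hp (trH _ Kr); rewrite pairB subrr.
have sD : subgroup D.
  split; first by split; [exact: sg0|rewrite /= alt0 subrr; exact: sg0].
  move=> [p1 p2] [q1 q2] [/= h1 h2] [/= h3 h4]; split; first exact: sgB.
  by rewrite /= halt -subrBB; apply: sgB.
exists D; split.
  split=> //; exists C; split.
    split; first by split; [exact: sg0|exact: sg0].
    by move=> [p1 p2] [q1 q2] [/= h1 h2] [/= h3 h4]; split; [exact: sgB|exact: sgB].
  split.
    move=> [t r] [/= ERr Et] [/= Mt FRr].
    have r0 : r = 0 by apply: EF.
    rewrite r0 alt0 subr0 in Et.
    have t0 : t = 0 by rewrite -(piid _ Et); exact: Mt.
    by rewrite r0 t0.
  move=> [t r]; have [e [f [ERe [FRf ref]]]] := decR r.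
  exists (pi t + alt e, e), (t - pi t - alt e, f); split.
    by split=> //=; rewrite addrK.
  split.
    split=> //=; rewrite /M !hpi (piid _ (piE t)) (altM e : pi (alt e) = 0) subrr.
    by rewrite subr0.
  by rewrite pairD ref alg4.
apply: ess_of; split; first exact: HD.
move=> [t r] [/= ERr Et] pnz.
have [r0|rnz] := pselect (r = 0).
  rewrite r0 alt0 subr0 in Et.
  have tnz : t <> 0 by move=> t0; apply: pnz; rewrite t0 r0.
  have [i [hi ni]] := edE t Et tnz.
  exists i; rewrite pairMz r0 mul0rz; split=> //.
  by move=> [].
have [j [Kj nj]] := edK r ERr rnz.
case: Kj => s hs.
have Ee' : E (t *~ j - s).
  have := sgB sE (sgMz j sE Et) (HD _ hs).2; rewrite /= (addfMz halt) mulrzBl subrBB subrr subr0.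
  by [].
have [e0|enz] := pselect (t *~ j - s = 0).
  exists j; rewrite pairMz; have -> : t *~ j = s by apply/eqP; rewrite -subr_eq0 e0.
  by split=> // -[].
have [i [hi ni]] := edE _ Ee' enz.
exists (j * i); rewrite pairMz !mulrzA.
have -> : t *~ j = s + (t *~ j - s) by rewrite addrC subrK.
rewrite mulrzDl; split.
  by have := sgD sH (sgMz i sH hs) hi; rewrite pairMz pairD addr0.
move=> [_] /(tf_int tfR) [//|i0]; apply: ni; by rewrite i0 mulr0z.
Qed.
End MainE.
Theorem proposition2p13 (T R : zmodType) :
  torsion_group T -> torsion_free R ->
  (semi_generalized_Bassian (T * R)%type <->
   (semi_generalized_Bassian T /\ semi_generalized_Bassian R /\
    (infinite_rank R -> divisible T))).
Proof.
move=> tT tfR; split.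
  move=> sgb; split; first exact: (partB1 tfR sgb).
  split; first exact: (partB2 tT tfR sgb).
  move=> ir; apply: contrapT => ndiv.
  have [c [n [n0 nc]]] : exists (c : T) n, (0 < n)%N /\ forall y, y *+ n != c.
    apply: contrapT => h; apply: ndiv => c n n0.
    apply: contrapT => hy; apply: h; exists c, n; split=> // y.
    by apply/eqP => e; apply: hy; exists y.
  have [x ix] := inf_seq tfR ir.
  exact: (not_sgb tT tfR ix n0 nc sgb).
move=> [sT [sR hdiv]]; have [ir|nir] := pselect (infinite_rank R).
  exact: (partE tT tfR sR (hdiv ir)).
exact: (partD tT tfR sT nir).
Qed.
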